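(* Let $h_{2i}:=\frac{(-1)^{i}\cdot 2^{2i+1}\cdot(2^{2i-1}-1)\cdot B_i}{(2i)!}$ and $h_{2i-1}:=0$ for $i\geq1$, and for an integer partition $\lambda$ define $$h_{\lambda}=\frac{(-1)^{l(\lambda)}}{\prod_{i\geq1}m_i(\lambda)!}\sum_{\pi\in\Pi_{l(\lambda)}}\Big\{(-1)^{l(\pi)}\prod_{i=1}^{l(\pi)}\big[(|\pi_i|-1)!\cdot h_{\lambda_{\pi_i}}\big]\Big\}.$$ If $m_i(\lambda)\in\{0,1\}$ for all $i$ (i.e. the parts of $\lambda$ are mutually distinct), then the $2$-adic valuation satisfies $\nu_2(h_\lambda)\geq1$.
   Context: $B_i>0$ are the unsigned Bernoulli numbers defined by $\frac{x}{\sinh x}=1+\sum_{i\geq1}\frac{(-1)^i(2^{2i}-2)B_i}{(2i)!}x^{2i}$. For a nonzero integer $k$, $\nu_2(k)$ is the largest $t\ge0$ with $2^t\mid k$, $\nu_2(0)=\infty$, and for rationals $\nu_2(k_1/k_2)=\nu_2(k_1)-\nu_2(k_2)$. For a partition $\lambda$: $l(\lambda)$ length, $m_i(\lambda)$ the number of parts equal to $i$. $\Pi_n$ is the set of set partitions of $\{1,\ldots,n\}$; for $\pi=\{\pi_1,\ldots,\pi_{l(\pi)}\}\in\Pi_{l(\lambda)}$, $l(\pi)$ is its number of blocks, $|\pi_i|$ block size, $\lambda_{\pi_i}:=\sum_{j\in\pi_i}\lambda_j$. *)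

(* Defs.v *)
From mathcomp Require Import all_boot all_order all_algebra.
Set Implicit Arguments. Unset Strict Implicit. Unset Printing Implicit Defensive.
Import Order.TTheory GRing.Theory Num.Theory.
Local Open Scope ring_scope.

(* Coefficients c_n of x/sinh x = sum_n c_n x^(2n).  Since
   sinh x / x = sum_k x^(2k)/(2k+1)!, the c_n are the unique rationals with
   c_0 = 1 and sum_(k=0..n) c_(n-k)/(2k+1)! = 0 for n >= 1.
   [xsinh_coefs n] is the list [c_0; ...; c_n]. *)
Fixpoint xsinh_coefs (n : nat) : seq rat :=
  match n with
  | 0 => [:: 1]
  | n'.+1 =>
      let s := xsinh_coefs n' in
      rcons s (- \sum_(1 <= k < n'.+2)
                  s`_(n'.+1 - k) / ((2 * k).+1)`!%:R)
  end.

Definition xsinh_coef (n : nat) : rat := (xsinh_coefs n)`_n.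

(* Unsigned Bernoulli numbers: x/sinh x = 1 + sum_(i>=1) (-1)^i (2^(2i)-2) B_i/(2i)! x^(2i). *)
Definition bern (i : nat) : rat :=
  xsinh_coef i * ((2 * i)`!)%:R * (-1) ^+ i / (2 ^+ (2 * i) - 2).

Definition hcoef (n : nat) : rat :=
  if odd n then 0 else
  let i := n./2 in
  (-1) ^+ i * 2 ^+ (2 * i).+1 * (2 ^+ (2 * i).-1 - 1) * bern i / ((2 * i)`!)%:R.

Definition mult (l : seq nat) (i : nat) : nat := count_mem i l.

(* h_lambda, lambda given as the sequence of its parts; set partitions of
   {1..l(lambda)} are realized as partitions of [set: 'I_(size l)]. *)
Definition hpart (l : seq nat) : rat :=
  (-1) ^+ size l / (\prod_(i < (\sum_(x <- l) x).+1) ((mult l i)`!)%:R) *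
  \sum_(P : {set {set 'I_(size l)}} | partition P [set: 'I_(size l)])
     ((-1) ^+ #|P| *
      \prod_(B in P) (((#|B|.-1)`!)%:R * hcoef (\sum_(j in B) nth 0%N l j))).

Definition nu2 (q : rat) : int :=
  (logn 2 `|numq q|)%:Z - (logn 2 `|denq q|)%:Z.

(* Main.v *)
Require Import Defs.
From mathcomp Require Import all_boot all_order all_algebra.
From mathcomp Require Import zify ring lra.
Import Order.TTheory GRing.Theory Num.Theory.

Definition oddfact m := (\prod_(i < m) (2 * i).+1)%N.

Lemma oddfact_odd m : odd (oddfact m).
Proof.
rewrite /oddfact; elim: m => [|m IH]; first by rewrite big_ord0.
rewrite big_ord_recr /= oddM IH /=; by rewrite mul2n odd_double.
Qed.

Lemma fact_double m : ((2 * m)`! = 2 ^ m * m`! * oddfact m)%N.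
Proof.
elim: m => [|m IH]; first by rewrite /oddfact big_ord0.
rewrite /oddfact big_ord_recr /= -/(oddfact m).
have -> : (2 * m.+1 = (2 * m).+2)%N by lia.
rewrite !factS IH expnS.
ring.
Qed.

Lemma fact_dec n : (0 < n)%N -> exists e b, odd b /\ n`! = (2 ^ e * b)%N /\ (e < n)%N.
Proof.
elim: n {-2}n (leqnn n) => [|N IH] n Hn Hp; first by lia.
have [m [Hm|Hm]] : exists m, n = (2 * m)%N \/ n = (2 * m).+1.
  exists n./2; have := odd_double_half n; rewrite -mul2n; case: (odd n) => /= H; [right|left]; lia.
- have Hm0 : (0 < m)%N by lia.
  have [e [b [Hb [Hf He]]]] := IH m (ltac:(lia)) Hm0.
  exists (m + e)%N, (b * oddfact m)%N; split; first by rewrite oddM Hb oddfact_odd.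
  split; last by lia.
  by rewrite Hm fact_double Hf expnD; ring.
- case: (posnP m) => [Hm0|Hm0].
    by exists 0%N, 1%N; rewrite Hm Hm0.
  have [e [b [Hb [Hf He]]]] := IH m (ltac:(lia)) Hm0.
  exists (m + e)%N, (b * oddfact m * (2 * m).+1)%N; split.
    by rewrite !oddM Hb oddfact_odd /= mul2n odd_double.
  split; last by lia.
  by rewrite Hm factS fact_double Hf expnD; ring.
Qed.
Local Open Scope ring_scope.
Definition Pz (q : rat) := exists (a : int) (b : nat), odd b /\ q = a%:~R / b%:R.
Definition P2 (q : rat) := exists (a : int) (b : nat), odd b /\ q = 2 * a%:~R / b%:R.

Lemma oddnz {b : nat} : odd b -> (b%:R : rat) != 0.
Proof. by move=> Hb; rewrite pnatr_eq0; case: b Hb. Qed.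

Lemma Pz_int (a : int) : Pz a%:~R.
Proof. by exists a, 1%N; rewrite divr1. Qed.

Lemma Pz_nat (n : nat) : Pz n%:R.
Proof. by exists n, 1%N; rewrite divr1. Qed.

Lemma Pz1 : Pz 1. Proof. exact: (Pz_nat 1). Qed.

Lemma PzD x y : Pz x -> Pz y -> Pz (x + y).
Proof.
move=> [a1 [b1 [H1 ->]]] [a2 [b2 [H2 ->]]].
exists (a1 * b2%:Z + a2 * b1%:Z), (b1 * b2)%N; split; first by rewrite oddM H1 H2.
have := oddnz H1; have := oddnz H2 => n2 n1.
rewrite natrM rmorphD !rmorphM /= -!pmulrn; field. by rewrite n1 n2.
Qed.

Lemma PzM x y : Pz x -> Pz y -> Pz (x * y).
Proof.
move=> [a1 [b1 [H1 ->]]] [a2 [b2 [H2 ->]]].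
exists (a1 * a2), (b1 * b2)%N; split; first by rewrite oddM H1 H2.
have := oddnz H1; have := oddnz H2 => n2 n1.
rewrite natrM !rmorphM /=. field. by rewrite n1 n2.
Qed.

Lemma P2Pz x : P2 x -> Pz x.
Proof. by move=> [a [b [H ->]]]; exists (2 * a), b; rewrite rmorphM. Qed.

Lemma P2M x y : P2 x -> Pz y -> P2 (x * y).
Proof.
move=> [a1 [b1 [H1 ->]]] [a2 [b2 [H2 ->]]].
exists (a1 * a2), (b1 * b2)%N; split; first by rewrite oddM H1 H2.
have := oddnz H1; have := oddnz H2 => n2 n1.
rewrite natrM !rmorphM /=. field. by rewrite n1 n2.
Qed.

Lemma P2D x y : P2 x -> P2 y -> P2 (x + y).
Proof.
move=> [a1 [b1 [H1 ->]]] [a2 [b2 [H2 ->]]].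
exists (a1 * b2%:Z + a2 * b1%:Z), (b1 * b2)%N; split; first by rewrite oddM H1 H2.
have := oddnz H1; have := oddnz H2 => n2 n1.
rewrite natrM rmorphD !rmorphM /= -!pmulrn; field. by rewrite n1 n2.
Qed.

Lemma P20 : P2 0. Proof. by exists 0, 1%N; rewrite mulr0 mul0r. Qed.

Lemma P2N x : P2 x -> P2 (- x).
Proof. move=> H; rewrite -mulN1r mulrC; apply: P2M H _; exact: (Pz_int (-1)). Qed.

Lemma P2_nu2 q : P2 q -> q != 0 -> (1 <= nu2 q)%R.
Proof.
move=> [a [b [Hb Hq]]] Hq0.
have Hbn := oddnz Hb.
have Ha : a != 0.
  apply/eqP => Ha0; move/eqP: Hq0; apply; by rewrite Hq Ha0 mulr0 mul0r.
have Hn : numq q != 0 by rewrite numq_eq0.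
have E : (numq q * b%:Z = 2 * a * denq q :> int).
  apply: (@intr_inj rat); rewrite !rmorphM /= -pmulrn.
  rewrite numqE {1}Hq. field. done.
have := congr1 (fun z : int => `|z|%N) E; rewrite /= !abszM => E'.
have Hb0 : (0 < b)%N by case: (b) Hb.
have Hd0 : (0 < `|denq q|)%N by rewrite absz_gt0 denq_neq0.
have Hn0 : (0 < `|numq q|)%N by rewrite absz_gt0.
have Ha0 : (0 < `|a|)%N by rewrite absz_gt0.
have := congr1 (logn 2) E'.
rewrite lognM // lognM // ?muln_gt0 ?Ha0 // lognM //.
rewrite absz_nat (@logn_coprime 2 b); last by rewrite prime_coprime // dvdn2 Hb.
have -> : logn 2 `|2%R| = 1%N by [].
rewrite /nu2 addn0 => ->. lia.
Qed.

Lemma size_coefs n : size (xsinh_coefs n) = n.+1.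
Proof. by elim: n => [|n IH] //=; rewrite size_rcons IH. Qed.

Lemma coefs_nth n m : (m <= n)%N -> (xsinh_coefs n)`_m = xsinh_coef m.
Proof.
elim: n => [|n IH] Hm; first by case: m Hm.
rewrite /= nth_rcons size_coefs.
case: (ltnP m n.+1) => H; first exact: IH.
have -> : m = n.+1 by lia.
by rewrite eqxx /xsinh_coef /= nth_rcons size_coefs ltnn eqxx.
Qed.

Lemma c_rec n : xsinh_coef n.+1 =
  - \sum_(1 <= k < n.+2) xsinh_coef (n.+1 - k) / ((2 * k).+1)`!%:R.
Proof.
rewrite {1}/xsinh_coef /= nth_rcons size_coefs ltnn eqxx.
congr (- _); apply: eq_big_nat => k Hk; rewrite coefs_nth //; lia.
Qed.

Lemma g_P2 k : (0 < k)%N -> P2 (4 ^+ k / ((2 * k).+1)`!%:R).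
Proof.
move=> Hk.
have H2k : (0 < 2 * k)%N by lia.
have [e [b [Hb [Hf He]]]] := fact_dec _ H2k.
exists (2 ^+ (2 * k - 1 - e)), ((2 * k).+1 * b)%N; split.
  by rewrite oddM Hb /= mul2n odd_double.
rewrite factS Hf !natrM natrX rmorphXn /=.
have E : (2 * k = (2 * k - 1 - e) + e + 1)%N by lia.
have -> : (4 : rat) ^+ k = 2 ^+ (2 * k) by rewrite exprM; congr (_ ^+ _); ring.
rewrite {1}E !exprD expr1.
have := oddnz Hb; have : ((2 * k).+1%:R : rat) != 0 by rewrite pnatr_eq0.
have : (2 : rat) ^+ e != 0 by rewrite expf_neq0.
move=> h1 h2 h3. rewrite (_ : (2%:~R : rat) = 2) //. field. rewrite h1 h3 andbT /=. move: h2; rewrite -addn1 natrD natrM addrC. by [].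
Qed.

Lemma d_step n : (forall m, (m <= n)%N -> Pz (4 ^+ m * xsinh_coef m)) ->
  P2 (4 ^+ n.+1 * xsinh_coef n.+1).
Proof.
move=> IH; rewrite c_rec mulrN mulr_sumr; apply: P2N.
rewrite big_nat_cond; apply: big_ind; [exact: P20 | exact: P2D | ].
move=> k /andP [/andP [Hk1 Hk2] _].
have -> : (4 : rat) ^+ n.+1 * (xsinh_coef (n.+1 - k) / ((2 * k).+1)`!%:R) =
   (4 ^+ k / ((2 * k).+1)`!%:R) * (4 ^+ (n.+1 - k) * xsinh_coef (n.+1 - k)).
  rewrite {1}(_ : n.+1 = (n.+1 - k) + k)%N; last by lia.
  by rewrite exprD; ring.
apply: P2M; first exact: g_P2.
apply: IH; lia.
Qed.

Lemma d_Pz n : Pz (4 ^+ n * xsinh_coef n).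
Proof.
elim: n {-2}n (leqnn n) => [|N IH] n Hn.
  have -> : n = 0%N by lia.
  by rewrite expr0 mul1r /xsinh_coef /=; exact: Pz1.
case: n Hn => [|n] Hn.
  by rewrite expr0 mul1r /xsinh_coef /=; exact: Pz1.
apply: P2Pz; apply: d_step => m Hm; apply: IH; lia.
Qed.

Lemma hcoef_P2 n : P2 (hcoef n).
Proof.
rewrite /hcoef; case: (odd n) => /=; first exact: P20.
case: (n./2) => [|i].
  by rewrite /= expr0 subrr mulr0 !mul0r; exact: P20.
have -> : (-1) ^+ i.+1 * 2 ^+ (2 * i.+1).+1 * (2 ^+ (2 * i.+1).-1 - 1) * bern i.+1 /
      ((2 * i.+1)`!)%:R = 4 ^+ i.+1 * xsinh_coef i.+1.
  rewrite /bern.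
  have F : (((2 * i.+1)`!)%:R : rat) != 0 by rewrite pnatr_eq0 -lt0n fact_gt0.
  have S : ((-1) ^+ i.+1 * (-1) ^+ i.+1 : rat) = 1.
    by rewrite -exprMn mulrNN mulr1 expr1n.
  have e1 : ((2 * i.+1).+1 = 3 + (i + i))%N by lia.
  have e2 : ((2 * i.+1).-1 = 1 + (i + i))%N by lia.
  have e3 : ((2 * i.+1) = 2 + (i + i))%N by lia.
  have e4 : (4 : rat) ^+ i.+1 = 4 * (2 ^+ i * 2 ^+ i).
    by rewrite exprS -exprMn; congr (_ * _ ^+ _); ring.
  have x1 : (1 <= (2 : rat) ^+ i) by rewrite exprn_ege1.
  move: F S x1; set FF := (((2 * i.+1)`!)%:R : rat).
  rewrite e1 e2 e3 e4 !exprD.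
  set x := (2 : rat) ^+ i; set s := (-1 : rat) ^+ i.+1.
  set c := xsinh_coef i.+1 => HF S x1.
  have D : (2 ^+ 2 * (x * x) - 2 : rat) != 0.
    rewrite expr2; apply/eqP => h; clear -h x1; nra.
  rewrite !exprS !expr0 in D *.
  have -> : 4 * (x * x) * c = 4 * (x * x) * c * (s * s) by rewrite S mulr1. clearbody x s c FF. field. by rewrite HF D.
apply: (@d_step i) => m _; exact: d_Pz.
Qed.

Lemma PzN1 : Pz (-1).
Proof. by exists (-1), 1%N; rewrite divr1 rmorphN1. Qed.

Lemma PzX x n : Pz x -> Pz (x ^+ n).
Proof. move=> H; elim: n => [|n IH]; [exact: Pz1 | rewrite exprS; exact: PzM]. Qed.

Lemma hpart_P2 (l : seq nat) : l != [::] -> (forall i, (mult l i <= 1)%N) -> P2 (hpart l).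
Proof.
move=> Hl Hm.
have Hsz : (0 < size l)%N by move: Hl; case: (l).
rewrite /hpart big1 ?divr1; last first.
  move=> i _; have := Hm i; case: (mult l i) => [|[|]] //.
rewrite mulrC; apply: P2M; last by apply: PzX; exact: PzN1.
apply: big_ind; [exact: P20 | exact: P2D | ].
move=> P Hpart; rewrite mulrC; apply: P2M; last by apply: PzX; exact: PzN1.
have x : 'I_(size l) := Ordinal Hsz.
move/and3P: Hpart => [/eqP Hc _ _].
have : x \in cover P by rewrite Hc inE.
move/bigcupP => [B HB _].
rewrite (bigD1 B) //=.
apply: P2M.
  rewrite mulrC; apply: P2M; [exact: hcoef_P2 | exact: Pz_nat].
apply: big_ind; [exact: Pz1 | exact: PzM | ].
move=> C _; apply: PzM; [exact: Pz_nat | apply: P2Pz; exact: hcoef_P2].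
Qed.

Theorem lemma5p2 (l : seq nat) :
  l != [::] ->
  all (fun x => (0 < x)%N) l ->
  sorted geq l ->
  (forall i, (mult l i <= 1)%N) ->
  hpart l != 0 -> 1 <= nu2 (hpart l).
Proof.
move=> Hl _ _ Hm Hne; apply: P2_nu2 => //; exact: hpart_P2.
Qed.
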